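(* Let $e(m)=1$ if $m$ is even and $e(m)=0$ if $m$ is odd. For every real $\lambda$ (with the convention $\lambda^0=1$), as infinite lower triangular matrices indexed by $i,j\geq0$ (entries with $j>i$ equal to $0$): $$\Big[e(i-j)\binom{i}{j}\lambda^{i-j}\Big]^{-1}=\Big[\binom{i}{j}\lambda^{i-j}E_{i-j}\Big],$$ $$\Big[e(i-j)\binom{i}{j}\frac{\lambda^{i-j}}{i-j+1}\Big]^{-1}=\Big[\binom{i}{j}\lambda^{i-j}\sum_{k=0}^{i-j}\binom{i-j}{k}2^{k}B_{k}\Big],$$ $$\Big[\binom{2i}{2j}\lambda^{i-j}\Big]^{-1}=\Big[\binom{2i}{2j}\lambda^{i-j}E_{2(i-j)}\Big],$$ $$\Big[\binom{2i}{2j}\frac{\lambda^{i-j}}{2(i-j)+1}\Big]^{-1}=\Big[\binom{2i}{2j}\lambda^{i-j}\sum_{k=0}^{2i-2j}\binom{2i-2j}{k}2^{k}B_{k}\Big].$$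
   Context: The Euler numbers are $E_n=2^nE_n(1/2)$, where the Euler polynomials are defined by $\sum_{j\geq0}\frac{t^j}{j!}E_j(x)=\frac{2e^{xt}}{e^t+1}$ (so $\sum_n E_nt^n/n!=1/\cosh t$). The Bernoulli numbers are $B_n=B_n(0)$, where $\sum_{j\geq0}\frac{t^j}{j!}B_j(x)=\frac{te^{xt}}{e^t-1}$. For a lower triangular array $[a_{ij}]_{i,j\geq0}$ (with $a_{ij}=0$ for $j>i$) having nonzero diagonal, $[a_{ij}]^{-1}$ denotes its inverse as a lower triangular array, i.e. the array whose $(n+1)\times(n+1)$ leading truncation is the inverse of the leading truncation of $[a_{ij}]$ for every $n$. *)

(* Defs.v *)
From HB Require Import structures.
From mathcomp Require Import all_boot all_order all_algebra.
Set Implicit Arguments. Unset Strict Implicit. Unset Printing Implicit Defensive.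
Import Order.TTheory GRing.Theory Num.Theory.
Local Open Scope ring_scope.

(* Euler numbers E_0..E_n, characterized by the coefficient identity of
   cosh(t) * (sum_n E_n t^n/n!) = 1, i.e. E_0 = 1 and for n >= 1
   sum_{k <= n, n-k even} C(n,k) E_k = 0. *)
Fixpoint euler_seq (R : fieldType) (n : nat) : seq R :=
  match n with
  | 0 => [:: 1]
  | n'.+1 => let s := euler_seq R n' in
      rcons s (- \sum_(k < n'.+1)
                   (if odd (n'.+1 - k) then 0 else 'C(n'.+1, k)%:R * s`_k))
  end.
Definition euler_num (R : fieldType) (n : nat) : R := (euler_seq R n)`_n.

(* Bernoulli numbers B_n = B_n(0), characterized by the coefficient identity of
   (e^t - 1) * (sum_n B_n t^n/n!) = t, i.e. B_0 = 1 and for n >= 1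
   sum_{k <= n} C(n+1,k) B_k = 0  (so B_1 = -1/2). *)
Fixpoint bernoulli_seq (R : fieldType) (n : nat) : seq R :=
  match n with
  | 0 => [:: 1]
  | n'.+1 => let s := bernoulli_seq R n' in
      rcons s (- (n'.+2%:R)^-1 * \sum_(k < n'.+1) 'C(n'.+2, k)%:R * s`_k)
  end.
Definition bernoulli_num (R : fieldType) (n : nat) : R := (bernoulli_seq R n)`_n.

Definition evenind (R : fieldType) (m : nat) : R := if odd m then 0 else 1.

Definition ltrunc (R : fieldType) (a : nat -> nat -> R) (n : nat) : 'M[R]_n.+1 :=
  \matrix_(i < n.+1, j < n.+1) (if (j <= i)%N then a i j else 0).

Definition lt_inverse_of (R : fieldType) (b a : nat -> nat -> R) : Prop :=
  forall n : nat,
    ltrunc a n *m ltrunc b n = 1%:M /\ ltrunc b n *m ltrunc a n = 1%:M.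

(* Main.v *)
Require Import Defs.
From HB Require Import structures.
From mathcomp Require Import all_boot all_order all_algebra.
From mathcomp Require Import zify ring lra.
Import Order.TTheory GRing.Theory Num.Theory.
Local Open Scope ring_scope.

Lemma binA (i k m : nat) : (k + m <= i)%N ->
  ('C(i, k + m) * 'C(k + m, k) = 'C(i, k) * 'C(i - k, m))%N.
Proof.
move=> h.
have h1 : (k <= i)%N by lia.
have h2 : (m <= i - k)%N by lia.
apply/eqP; rewrite -(eqn_pmul2r (fact_gt0 k)) -(eqn_pmul2r (fact_gt0 m)).
rewrite -(eqn_pmul2r (fact_gt0 (i - k - m))); apply/eqP.
have e1 := bin_fact h. have e2 := bin_fact (leq_addr m k).
have e3 := bin_fact h1. have e4 := bin_fact h2.
rewrite addKn in e2.
have ee : (i - k - m = i - (k + m))%N by lia.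
rewrite ee.
transitivity ('C(i, k + m) * ('C(k + m, k) * (k`! * m`!)) * (i - (k + m))`!)%N.
  by rewrite !mulnA.
rewrite e2 -mulnA e1 -ee -e3 -e4.
ring.
Qed.

Lemma sum_win (R : fieldType) (A B : nat -> R) (n i k : nat) :
  (k <= i)%N -> (i <= n)%N ->
  \sum_(j < n.+1) ((if (j <= i)%N then A j else 0) * (if (k <= j)%N then B j else 0))
  = \sum_(m < (i - k).+1) A (k + m) * B (k + m).
Proof.
move=> hki hin.
rewrite -(big_mkord xpredT (fun j => (if (j <= i)%N then A j else 0) * (if (k <= j)%N then B j else 0))).
rewrite (big_cat_nat (leq0n k)) /=; last by lia.
rewrite big_nat_cond big1 ?add0r; last first.
  move=> j /andP [/andP [_ hj] _]; rewrite (_ : (k <= j)%N = false) ?mulr0 //; lia.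
rewrite (big_addn 0 _ k).
rewrite (big_cat_nat (leq0n (i - k).+1)) /=; last by lia.
rewrite [X in _ + X]big_nat_cond [X in _ + X]big1 ?addr0; last first.
  move=> j /andP [/andP [hj _] _]; rewrite (_ : (j + k <= i)%N = false) ?mul0r //; lia.
rewrite big_mkord; apply: eq_bigr => j _.
have hj := ltn_ord j.
rewrite (_ : (j + k <= i)%N = true); last by lia.
rewrite (_ : (k <= j + k)%N = true); last by lia.
by rewrite addnC.
Qed.

Lemma sum_win0 (R : fieldType) (A B : nat -> R) (n i k : nat) :
  (i < k)%N ->
  \sum_(j < n.+1) ((if (j <= i)%N then A j else 0) * (if (k <= j)%N then B j else 0)) = 0.
Proof.
move=> h; apply: big1 => j _.
case: ifP => h1; last by rewrite mul0r.
rewrite (_ : (k <= j)%N = false) ?mulr0 //; lia.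
Qed.

Lemma ltrunc_inv (R : fieldType) (bf : nat -> nat -> nat) (lam : R)
  (al be : nat -> R) (a b : nat -> nat -> R) :
  (forall i, bf i i = 1%N) ->
  (forall i k m, (k + m <= i)%N -> (bf i (k + m) * bf (k + m) k = bf i k * bf (i - k) m)%N) ->
  (forall i j, (j <= i)%N -> a i j = (bf i j)%:R * lam ^+ (i - j)%N * al (i - j)%N) ->
  (forall i j, (j <= i)%N -> b i j = (bf i j)%:R * lam ^+ (i - j)%N * be (i - j)%N) ->
  (forall d, \sum_(m < d.+1) (bf d m)%:R * al (d - m)%N * be m = (d == 0)%:R) ->
  lt_inverse_of b a.
Proof.
move=> hdiag hA ha hb hs n.
suff H : ltrunc a n *m ltrunc b n = 1%:M by split => //; apply: mulmx1C.
apply/matrixP => i k; rewrite !mxE.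
under eq_bigr => j _ do rewrite !mxE.
have hin : (i <= n)%N by rewrite -ltnS.
case: (leqP k i) => hki; last first.
  rewrite (sum_win0 _ (fun j => a i j) (fun j => b j k)) //.
  by rewrite (_ : (i == k) = false) //; apply/negbTE; rewrite -val_eqE /=; lia.
rewrite (sum_win _ (fun j => a i j) (fun j => b j k)) //.
transitivity ((bf i k)%:R * lam ^+ (i - k)%N *
   \sum_(m < (i - k).+1) (bf (i - k)%N m)%:R * al (i - k - m)%N * be m).
  rewrite mulr_sumr; apply: eq_bigr => m _.
  have hm := ltn_ord m.
  rewrite ha; last by lia.
  rewrite hb; last by lia.
  rewrite addKn (_ : (i - (k + m))%N = (i - k - m)%N); last by lia.
  have e : (k + m <= i)%N by lia.
  have e' : ((bf i (k + m)%N)%:R * (bf (k + m)%N k)%:R = (bf i k)%:R * (bf (i - k)%N m)%:R :> R).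
    by rewrite -!natrM (hA _ _ _ e).
  have -> : lam ^+ (i - k)%N = lam ^+ (i - k - m)%N * lam ^+ m.
    by rewrite -exprD; congr (_ ^+ _); lia.
  idtac.
  transitivity ((bf i k)%:R * (bf (i - k)%N m)%:R * (lam ^+ (i - k - m)%N * lam ^+ m * al (i - k - m)%N * be m)); last ring.
  rewrite -e'; ring.
rewrite hs.
case: (eqVneq i k) => [e|ne].
  by rewrite e subnn hdiag /= !mulr1.
rewrite (_ : (i - k == 0)%N = false) ?mulr0 //.
apply/negbTE; move: ne; rewrite -val_eqE /=; lia.
Qed.

Lemma euler_size (R : fieldType) n : size (euler_seq R n) = n.+1.
Proof. by elim: n => //= n IH; rewrite size_rcons IH. Qed.

Lemma euler_nth (R : fieldType) n k : (k <= n)%N -> (euler_seq R n)`_k = euler_num R k.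
Proof.
elim: n k => [|n IH] k hk.
  by move: hk; rewrite leqn0 => /eqP ->.
case: (ltngtP k n.+1) => h; last by rewrite h.
- by rewrite /= nth_rcons euler_size h IH.
- lia.
Qed.

Lemma euler_rec (R : fieldType) n :
  euler_num R n.+1 = - \sum_(k < n.+1)
     (if odd (n.+1 - k) then 0 else 'C(n.+1, k)%:R * euler_num R k).
Proof.
rewrite /euler_num /= nth_rcons euler_size ltnn eqxx.
congr (- _); apply: eq_bigr => k _; rewrite euler_nth //.
by rewrite -ltnS.
Qed.

Lemma E1 (R : fieldType) d :
  \sum_(m < d.+1) ('C(d, m))%:R * evenind R (d - m)%N * euler_num R m = (d == 0)%:R.
Proof.
case: d => [|n].
  by rewrite big_ord1 /= /evenind /euler_num /= !mul1r.
rewrite big_ord_recr /= euler_rec subnn binn /evenind /= !mul1r.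
apply/eqP; rewrite addr_eq0 opprK; apply/eqP.
apply: eq_bigr => k _; by case: ifP => _; rewrite ?mulr0 ?mul0r ?mulr1.
Qed.

Lemma sum_even (R : fieldType) (f : nat -> R) d :
  (forall k, (k <= 2 * d)%N -> odd k -> f k = 0) ->
  \sum_(k < (2 * d)%N.+1) f k = \sum_(m < d.+1) f (2 * m)%N.
Proof.
elim: d => [|d IH] h.
  by rewrite !big_ord1.
rewrite [in RHS]big_ord_recr /= -IH; last by move=> k hk; apply: h; lia.
rewrite (_ : (2 * d.+1).+1 = ((2 * d).+1).+2)%N; last by lia.
rewrite big_ord_recr big_ord_recr /=.
rewrite (h (2 * d).+1); [|lia|by rewrite /= oddM].
rewrite addr0; congr (_ + f _); lia.
Qed.

Lemma E3 (R : fieldType) d :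
  \sum_(m < d.+1) ('C(2 * d, 2 * m))%:R * 1 * euler_num R (2 * m) = (d == 0)%:R.
Proof.
have := E1 R (2 * d).
rewrite (_ : (2 * d == 0) = (d == 0))%N; last by lia.
move=> <-.
pose f := fun m => 'C(2 * d, m)%:R * evenind R (2 * d - m) * euler_num R m.
transitivity (\sum_(m < d.+1) f (2 * m)%N); last first.
  symmetry; apply: sum_even => k hk ok.
  by rewrite /f /evenind oddB // oddM ok /= mulr0 mul0r.
apply: eq_bigr => m _; rewrite /f; congr (_ * _); congr (_ * _).
by rewrite /evenind -mulnBr oddM.
Qed.

Lemma bern_size (R : fieldType) n : size (bernoulli_seq R n) = n.+1.
Proof. by elim: n => //= n IH; rewrite size_rcons IH. Qed.

Lemma bern_nth (R : fieldType) n k : (k <= n)%N -> (bernoulli_seq R n)`_k = bernoulli_num R k.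
Proof.
elim: n k => [|n IH] k hk.
  by move: hk; rewrite leqn0 => /eqP ->.
case: (ltngtP k n.+1) => h; last by rewrite h.
- by rewrite /= nth_rcons bern_size h IH.
- lia.
Qed.

Lemma bern_rec (R : realFieldType) n :
  \sum_(k < n.+2) 'C(n.+2, k)%:R * bernoulli_num R k = 0.
Proof.
rewrite big_ord_recr /=.
rewrite {2}/bernoulli_num /= nth_rcons bern_size ltnn eqxx.
set S := \sum_(k < n.+1) _.
have -> : \sum_(k < n.+1) 'C(n.+2, k)%:R * (bernoulli_seq R n)`_k = S.
  by apply: eq_bigr => k _; rewrite bern_nth // -ltnS.
rewrite binSn mulNr mulrN mulrA mulfV ?mul1r ?subrr //.
by rewrite pnatr_eq0.
Qed.

Lemma tri (R : fieldType) (F : nat -> nat -> R) N :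
  \sum_(m < N.+1) \sum_(k < m.+1) F m k
  = \sum_(k < N.+1) \sum_(l < (N - k).+1) F (k + l)%N k.
Proof.
elim: N => [|N IH].
  by rewrite !big_ord1.
rewrite big_ord_recr /= IH [in RHS]big_ord_recr /= subnn big_ord1 addn0.
rewrite [X in _ = X + _](eq_bigr (fun k : 'I_N.+1 =>
   \sum_(l < (N - k).+1) F (k + l)%N k + F N.+1 k)); last first.
  move=> k _; have hk := ltn_ord k.
  rewrite subSn // big_ord_recr /=; congr (_ + F _ _); lia.
by rewrite big_split /= -addrA; congr (_ + _); rewrite big_ord_recr.
Qed.

Lemma odd2 (R : fieldType) x : (odd x)%:R * 2 = 1 - (-1) ^+ x :> R.
Proof. by rewrite -signr_odd; case: (odd x) => /=; rewrite ?expr1 ?expr0; ring. Qed.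

Lemma Olem (R : fieldType) r :
  (\sum_(l < r.+1) 'C(r, l)%:R * (odd (r - l))%:R) * 2 = 2 ^+ r - (r == 0)%:R :> R.
Proof.
rewrite mulr_suml.
have e1 := exprDn (1 : R) 1 r.
have e2 := exprDn (-1 : R) 1 r.
rewrite addNr expr0n in e2.
rewrite (_ : (2 : R) = 1 + 1) // e1 e2 -sumrB; apply: eq_bigr => l _.
rewrite -mulrA odd2 !expr1n !mulr1 -mulr_natl; ring.
Qed.

Definition beta (R : fieldType) (m : nat) : R :=
  \sum_(k < m.+1) 'C(m, k)%:R * 2%:R ^+ k * bernoulli_num R k.

Lemma Tlem (R : fieldType) N :
  (\sum_(m < N.+1) 'C(N, m)%:R * (odd (N - m))%:R * beta R m) * 2
  = 2 ^+ N * \sum_(k < N) 'C(N, k)%:R * bernoulli_num R k.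
Proof.
rewrite /beta.
under eq_bigr => m _ do rewrite mulr_sumr.
rewrite (tri _ (fun m k => 'C(N, m)%:R * (odd (N - m))%:R * ('C(m, k)%:R * 2%:R ^+ k * bernoulli_num R k))).
under eq_bigr => k hk.
  have hk' := ltn_ord k.
  rewrite (eq_bigr (fun l : 'I_(N - k).+1 =>
     ('C(N, k)%:R * 2%:R ^+ k * bernoulli_num R k) *
     ('C(N - k, l)%:R * (odd (N - k - l))%:R))); last first.
    move=> l _; have hl := ltn_ord l.
    rewrite (_ : (N - (k + l))%N = (N - k - l)%N); last by lia.
    have e : ('C(N, k + l)%:R * 'C(k + l, k)%:R = 'C(N, k)%:R * 'C(N - k, l)%:R :> R).
      by rewrite -!natrM binA //; lia.
    transitivity ('C(N, k + l)%:R * 'C(k + l, k)%:R * ((odd (N - k - l))%:R * 2%:R ^+ k * bernoulli_num R k)); first ring.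
    rewrite e; ring.
  rewrite -mulr_sumr.
  over.
rewrite mulr_suml.
under eq_bigr => k _ do rewrite -mulrA Olem.
rewrite big_ord_recr /= subnn /= expr0 subrr mulr0 addr0.
rewrite mulr_sumr; apply: eq_bigr => k _.
have hk := ltn_ord k.
rewrite (_ : (N - k == 0)%N = false); last by lia.
rewrite subr0.
have -> : (2 : R) ^+ N = 2 ^+ k * 2 ^+ (N - k).
  by rewrite -exprD; congr (_ ^+ _); lia.
ring.
Qed.

Lemma B2 (R : realFieldType) d :
  \sum_(m < d.+1) 'C(d, m)%:R * (evenind R (d - m) / (d - m).+1%:R) * beta R m
  = (d == 0)%:R.
Proof.
set S := \sum_(m < d.+1) _.
have hT := Tlem R d.+1.
have eT : \sum_(m < d.+2) 'C(d.+1, m)%:R * (odd (d.+1 - m))%:R * beta R m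
          = d.+1%:R * S.
  rewrite big_ord_recr /= subnn /= mulr0 mul0r addr0 /S mulr_sumr.
  apply: eq_bigr => m _; have hm := ltn_ord m.
  have e := mul_bin_down d.+1 m; rewrite /= in e.
  rewrite [RHS]mulrA [d.+1%:R * _]mulrA -[d.+1%:R * _]natrM e natrM.
  rewrite (_ : (d.+1 - m)%N = (d - m).+1); last by lia.
  rewrite /evenind /=.
  have hnz : (d - m).+1%:R != 0 :> R by rewrite pnatr_eq0.
  case: (odd (d - m)%N) => /=; first by rewrite !(mulr0, mul0r).
  rewrite (_ : (nat_of_bool true)%:R = 1 :> R) //.
  by rewrite mulr1 mul1r [_ * 'C(_, _)%:R]mulrC mulfK.
rewrite eT in hT.
have h2 : (2 : R) != 0 by rewrite pnatr_eq0.
have hd : d.+1%:R != 0 :> R by rewrite pnatr_eq0.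
case: d S hT eT hd => [|n] S hT _ hd.
  rewrite big_ord1 /= /bernoulli_num /= !mul1r expr1 in hT.
  by apply: (mulIf h2); rewrite hT /= mulr1 mul1r.
rewrite (bern_rec R n) mulr0 in hT.
move: hT => /eqP; rewrite !mulf_eq0 (negbTE h2) (negbTE hd) orbF /= => /eqP ->.
done.
Qed.

Lemma B4 (R : realFieldType) d :
  \sum_(m < d.+1) 'C(2 * d, 2 * m)%:R * ((2 * (d - m)).+1%:R)^-1 * beta R (2 * m)
  = (d == 0)%:R.
Proof.
have := B2 R (2 * d).
rewrite (_ : (2 * d == 0) = (d == 0))%N; last by lia.
move=> <-.
pose f := fun m => 'C(2 * d, m)%:R * (evenind R (2 * d - m) / (2 * d - m).+1%:R) * beta R m.
transitivity (\sum_(m < d.+1) f (2 * m)%N); last first.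
  symmetry; apply: sum_even => k hk ok.
  by rewrite /f /evenind oddB // oddM ok /= !(mul0r, mulr0).
apply: eq_bigr => m _; rewrite /f; congr (_ * _); congr (_ * _).
by rewrite /evenind -mulnBr oddM /= mul1r.
Qed.

Lemma binA2 (i k m : nat) : (k + m <= i)%N ->
  ('C(2 * i, 2 * (k + m)) * 'C(2 * (k + m), 2 * k) = 'C(2 * i, 2 * k) * 'C(2 * (i - k), 2 * m))%N.
Proof.
move=> h; rewrite mulnDr mulnBr binA //; lia.
Qed.

Theorem mainTheorem4 (R : realFieldType) (lam : R) :
  lt_inverse_of
    (fun i j => 'C(i, j)%:R * lam ^+ (i - j) * euler_num R (i - j))
    (fun i j => evenind R (i - j) * 'C(i, j)%:R * lam ^+ (i - j))
  /\
  lt_inverse_of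
    (fun i j => 'C(i, j)%:R * lam ^+ (i - j) *
       \sum_(k < (i - j).+1) 'C(i - j, k)%:R * 2%:R ^+ k * bernoulli_num R k)
    (fun i j => evenind R (i - j) * 'C(i, j)%:R * lam ^+ (i - j)
                  / ((i - j).+1)%:R)
  /\
  lt_inverse_of
    (fun i j => 'C(2 * i, 2 * j)%:R * lam ^+ (i - j) * euler_num R (2 * (i - j)))
    (fun i j => 'C(2 * i, 2 * j)%:R * lam ^+ (i - j))
  /\
  lt_inverse_of
    (fun i j => 'C(2 * i, 2 * j)%:R * lam ^+ (i - j) *
       \sum_(k < (2 * i - 2 * j).+1)
          'C(2 * i - 2 * j, k)%:R * 2%:R ^+ k * bernoulli_num R k)
    (fun i j => 'C(2 * i, 2 * j)%:R * lam ^+ (i - j) / (2 * (i - j)).+1%:R).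
Proof.
split; [|split; [|split]].
- apply: (ltrunc_inv _ binomial lam (evenind R) (euler_num R)).
  + exact: binn.
  + exact: binA.
  + by move=> i j _ /=; ring.
  + by [].
  + exact: E1.
- apply: (ltrunc_inv _ binomial lam (fun x => evenind R x / x.+1%:R) (beta R)).
  + exact: binn.
  + exact: binA.
  + by move=> i j _ /=; rewrite !mulrA; ring.
  + by [].
  + exact: B2.
- apply: (ltrunc_inv _ (fun i j => 'C(2 * i, 2 * j)) lam (fun _ => 1) (fun m => euler_num R (2 * m))).
  + by move=> i; exact: binn.
  + exact: binA2.
  + by move=> i j _ /=; rewrite mulr1.
  + by [].
  + exact: E3.
- apply: (ltrunc_inv _ (fun i j => 'C(2 * i, 2 * j)) lam (fun x => ((2 * x).+1%:R)^-1) (fun m => beta R (2 * m))).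
  + by move=> i; exact: binn.
  + exact: binA2.
  + by [].
  + by move=> i j _ /=; rewrite /beta -mulnBr.
  + exact: B4.
Qed.
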